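(* Let $n\ge4$, let $\sigma,\tau\in\Sigma_n$, let $\mathbf A\in\mathcal G_n$, and let $\mathbf X=D^\sigma(\mathbf A)$ and $\mathbf X'=D^\tau(\mathbf A)$ (both with underlying set $\mathcal G_n(\mathbf A,\mathbf C_n)$). Then (i) the relations $\simeq^\sigma_{\mathbf X}$ and $\simeq^\tau_{\mathbf X'}$ coincide; (ii) the relations $\le^\sigma_{\mathbf X}$ and $\le^\tau_{\mathbf X'}$ coincide. Moreover, for every $\sigma\in\Sigma_n$, $\le^\sigma_{\mathbf X}$ is a partial order on $X/{\simeq^\sigma_{\mathbf X}}$ of depth at most $n-2$, whose covering relation is $\prec^\sigma_{\mathbf X}$.
   Context: $\mathbf C_n$ is the Heyting algebra on the chain $\{0<1<\dots<n-1\}$, with min, max, $\bot=0$, $\top=n-1$, $a\to b=\top$ if $a\le b$, $a\to b=b$ if $b<a$. $\mathcal G_n$ is the class of algebras isomorphic to subalgebras of direct powers of $\mathbf C_n$; $\mathcal G_n(\mathbf A,\mathbf C_n)$ is the set of Heyting homomorphisms $\mathbf A\to\mathbf C_n$. For $n\ge4$: for $1\le i\le n-2$, $h_i$ is the endomorphism of $\mathbf C_n$ with $h_i(k)=k+1$ if $i\le k<n-1$ and $h_i(k)=k$ otherwise. For $1\le i\le n-3$, $g_i$ is the partial map with domain $C_n\setminus\{i\}$ with $g_i(i+1)=i$ and $g_i(k)=k$ for $k\notin\{i,i+1\}$, and $f_i\colon C_n\setminus\{i+1\}\to C_n\setminus\{i\}$ is its inverse. $\Sigma_n=\{f_1,g_1\}\times\dots\times\{f_{n-3},g_{n-3}\}\times\{h_1,\dots,h_{n-2}\}$,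 elements written $\sigma=(\sigma_1,\dots,\sigma_{n-2})$. $D^\sigma(\mathbf A)$ is the set $\mathcal G_n(\mathbf A,\mathbf C_n)$ (with the topology inherited from the product of discrete spaces $C_n^A$) equipped with the lifted (partial) operations $\sigma_i^{\mathbf X}(x)=\sigma_i\circ x$, defined iff $\operatorname{ran}x\subseteq\operatorname{dom}\sigma_i$. For such $\mathbf X$: $x\simeq^\sigma_{\mathbf X}y$ iff $x=y$ or there is a finite sequence $x=z_0,\dots,z_N=y$ in $X$ such that for each $j<N$ some $i_j\in\{1,\dots,n-3\}$ satisfies $z_{j+1}=\sigma_{i_j}^{\mathbf X}(z_j)$ or $z_j=\sigma_{i_j}^{\mathbf X}(z_{j+1})$; this is an equivalence relation, with classes $[x]$. On $X/{\simeq^\sigma_{\mathbf X}}$ define $[x]\prec^\sigma_{\mathbf X}[y]$ iff $x\not\simeq^\sigma_{\mathbf X}y$ and there exists $z\simeq^\sigma_{\mathbf X}x$ with $\sigma_{n-2}^{\mathbf X}(z)\simeq^\sigma_{\mathbf X}y$; $\le^\sigma_{\mathbf X}$ is the reflexive transitive closure of $\prec^\sigma_{\mathbf X}$. Depth: in a poset $P$ where no ${\uparrow}p$ contains an infinite ascending chain, $d(p)=\max\{|C|-1: C\subseteq{\uparrow}p \text{ a chain}\}$, and the depth of $P$ is $\sup_p d(p)$. *)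

(* Defs.v *)
From Stdlib Require Import Arith Bool Relations.

(* Signature of a Heyting algebra: carrier with meet, join, implication,
   bottom and top.  (Being a Heyting algebra follows from membership in G_n.) *)
Record HSig := {
  carrier :> Type;
  hmeet : carrier -> carrier -> carrier;
  hjoin : carrier -> carrier -> carrier;
  himp  : carrier -> carrier -> carrier;
  hbot  : carrier;
  htop  : carrier }.

(* The chain C_n on {0,...,n-1}. *)
Definition Cimp (n a b : nat) : nat := if a <=? b then n - 1 else b.

Definition is_hom (n : nat) (A : HSig) (x : A -> nat) : Prop :=
  (forall a, x a < n) /\
  x (hbot A) = 0 /\ x (htop A) = n - 1 /\
  (forall a b, x (hmeet A a b) = Nat.min (x a) (x b)) /\
  (forall a b, x (hjoin A a b) = Nat.max (x a) (x b)) /\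
  (forall a b, x (himp A a b) = Cimp n (x a) (x b)).

(* A is in G_n: A embeds (injectively, homomorphically) into a direct power
   C_n^I; the pointwise operations make e a homomorphism iff every coordinate
   projection composed with e is a homomorphism. *)
Definition in_Gn (n : nat) (A : HSig) : Prop :=
  exists (I : Type) (e : A -> I -> nat),
    (forall a b, e a = e b -> a = b) /\
    (forall i, is_hom n A (fun a => e a i)).

(* Partial maps on C_n, encoded with option (None = outside the domain). *)
Definition gmap (i k : nat) : option nat :=
  if k =? i then None else if k =? i + 1 then Some i else Some k.
Definition fmap (i k : nat) : option nat :=
  if k =? i + 1 then None else if k =? i then Some (i + 1) else Some k.
Definition hmap (n i k : nat) : nat :=
  if (i <=? k) && (k <? n - 1) then k + 1 else k.

(* sigma = (sigma_1,...,sigma_{n-2}) in Sigma_n is encoded by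
   fs : nat -> bool (fs i = true means sigma_i = f_i, false means g_i,
   only 1 <= i <= n-3 matter) and k with 1 <= k <= n-2 (sigma_{n-2} = h_k). *)
Definition sig_i (fs : nat -> bool) (i : nat) : nat -> option nat :=
  if fs i then fmap i else gmap i.

(* y = p^X(x): ran x is inside dom p and y = p o x. *)
Definition lifted (A : HSig) (p : nat -> option nat) (x y : A -> nat) : Prop :=
  forall a, p (x a) = Some (y a).

Definition step (n : nat) (A : HSig) (fs : nat -> bool) (x y : A -> nat) : Prop :=
  is_hom n A x /\ is_hom n A y /\
  exists i, 1 <= i <= n - 3 /\
    (lifted A (sig_i fs i) x y \/ lifted A (sig_i fs i) y x).

Definition sim (n : nat) (A : HSig) (fs : nat -> bool) : relation (A -> nat) :=
  clos_refl_trans (A -> nat) (step n A fs).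

(* [x] prec^sigma_X [y], expressed on representatives *)
Definition prec (n : nat) (A : HSig) (fs : nat -> bool) (k : nat)
  (x y : A -> nat) : Prop :=
  ~ sim n A fs x y /\
  exists z, is_hom n A z /\ sim n A fs z x /\
    sim n A fs (fun a => hmap n k (z a)) y.

Definition le (n : nat) (A : HSig) (fs : nat -> bool) (k : nat)
  : relation (A -> nat) :=
  clos_refl_trans (A -> nat) (fun u v => sim n A fs u v \/ prec n A fs k u v).

(* Main.v *)
Require Import Defs.
From Stdlib Require Import Arith Relations Lia Classical ClassicalEpsilon FunctionalExtensionality.

Lemma hom_bound n A x : is_hom n A x -> forall a, x a < n.
Proof. intros H; apply H. Qed.
Lemma hom_bot n A x : is_hom n A x -> x (hbot A) = 0.
Proof. intros H; apply H. Qed.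
Lemma hom_top n A x : is_hom n A x -> x (htop A) = n - 1.
Proof. intros H; apply H. Qed.
Lemma hom_imp n A x : is_hom n A x -> forall a b, x (himp A a b) = Cimp n (x a) (x b).
Proof. intros H; apply H. Qed.

Lemma Cimp_top n u v : u < n -> v < n -> (Cimp n u v = n-1 <-> u <= v).
Proof. intros. unfold Cimp. destruct (Nat.leb_spec u v); split; intros; lia. Qed.

Lemma hom_le n A x a b : is_hom n A x -> (x a <= x b <-> x (himp A a b) = n-1).
Proof. intros H. rewrite (hom_imp _ _ _ H). rewrite Cimp_top; try apply (hom_bound _ _ _ H). tauto. Qed.

Lemma hom_comp n A x (psi : nat -> nat) :
  is_hom n A x -> psi 0 = 0 -> psi (n-1) = n-1 ->
  (forall a, psi (x a) < n) ->
  (forall a b, x a <= x b -> psi (x a) <= psi (x b)) ->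
  (forall a b, x b < x a -> psi (x b) < psi (x a) \/ psi (x b) = n-1) ->
  is_hom n A (fun a => psi (x a)).
Proof.
  intros [H0 [Hb [Ht [Hm [Hj Hi]]]]] P0 P1 Pn Pmon Pstr.
  split; [|split; [|split; [|split; [|split]]]]; simpl.
  - apply Pn.
  - rewrite Hb; exact P0.
  - rewrite Ht; exact P1.
  - intros a b. rewrite Hm. destruct (Nat.le_ge_cases (x a) (x b)) as [h|h].
    + rewrite (Nat.min_l _ _ h). specialize (Pmon a b h). lia.
    + rewrite (Nat.min_r _ _ h). specialize (Pmon b a h). lia.
  - intros a b. rewrite Hj. destruct (Nat.le_ge_cases (x a) (x b)) as [h|h].
    + rewrite (Nat.max_r _ _ h). specialize (Pmon a b h). lia.
    + rewrite (Nat.max_l _ _ h). specialize (Pmon b a h). lia.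
  - intros a b. rewrite Hi. unfold Cimp at 1. destruct (Nat.leb_spec (x a) (x b)) as [h|h].
    + rewrite P1. specialize (Pmon a b h). unfold Cimp.
      destruct (Nat.leb_spec (psi (x a)) (psi (x b))); lia.
    + unfold Cimp. destruct (Nat.leb_spec (psi (x a)) (psi (x b))) as [h'|h'].
      * destruct (Pstr a b h); lia.
      * reflexivity.
Qed.

Definition Gm (i t : nat) := if t =? i + 1 then i else t.
Definition Tr (n j t : nat) := if j <=? t then n - 1 else t.
Definition Mv (n u t : nat) := if t =? u then n - 2 else t.

Lemma Gm_hom n A x i : 4 <= n -> is_hom n A x -> 1 <= i <= n - 3 -> ~ (exists a, x a = i) ->
  is_hom n A (fun a => Gm i (x a)).
Proof.
  intros Hn Hx Hi Hno.
  assert (Hne : forall a, x a <> i) by (intros a E; apply Hno; eauto).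
  pose proof (hom_bound _ _ _ Hx) as Hb.
  apply hom_comp; auto; unfold Gm.
  - destruct (Nat.eqb_spec 0 (i+1)); lia.
  - destruct (Nat.eqb_spec (n-1) (i+1)); lia.
  - intros a. specialize (Hb a). destruct (Nat.eqb_spec (x a) (i+1)); lia.
  - intros a b. pose proof (Hne a). pose proof (Hne b).
    destruct (Nat.eqb_spec (x a) (i+1)), (Nat.eqb_spec (x b) (i+1)); lia.
  - intros a b. pose proof (Hne a). pose proof (Hne b).
    destruct (Nat.eqb_spec (x a) (i+1)), (Nat.eqb_spec (x b) (i+1)); lia.
Qed.

Lemma Tr_hom n A x j : is_hom n A x -> 1 <= j <= n - 1 -> is_hom n A (fun a => Tr n j (x a)).
Proof.
  intros Hx Hj. pose proof (hom_bound _ _ _ Hx) as Hb.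
  apply hom_comp; auto; unfold Tr.
  - destruct (Nat.leb_spec j 0); lia.
  - destruct (Nat.leb_spec j (n-1)); lia.
  - intros a. specialize (Hb a). destruct (Nat.leb_spec j (x a)); lia.
  - intros a b. pose proof (Hb a). pose proof (Hb b).
    destruct (Nat.leb_spec j (x a)), (Nat.leb_spec j (x b)); lia.
  - intros a b. pose proof (Hb a). pose proof (Hb b).
    destruct (Nat.leb_spec j (x a)), (Nat.leb_spec j (x b)); lia.
Qed.

Lemma Mv_hom n A w u : is_hom n A w -> 1 <= u <= n - 2 -> (forall a, w a <= u \/ w a = n - 1) ->
  is_hom n A (fun a => Mv n u (w a)).
Proof.
  intros Hx Hu Him. pose proof (hom_bound _ _ _ Hx) as Hb.
  apply hom_comp; auto; unfold Mv.
  - destruct (Nat.eqb_spec 0 u); lia.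
  - destruct (Nat.eqb_spec (n-1) u); lia.
  - intros a. specialize (Hb a). destruct (Nat.eqb_spec (w a) u); lia.
  - intros a b. pose proof (Hb a). pose proof (Hb b). pose proof (Him a). pose proof (Him b).
    destruct (Nat.eqb_spec (w a) u), (Nat.eqb_spec (w b) u); lia.
  - intros a b. pose proof (Hb a). pose proof (Hb b). pose proof (Him a). pose proof (Him b).
    destruct (Nat.eqb_spec (w a) u), (Nat.eqb_spec (w b) u); lia.
Qed.

Lemma hmap_hom n A z k : is_hom n A z -> 1 <= k <= n - 2 -> is_hom n A (fun a => hmap n k (z a)).
Proof.
  intros Hx Hk. pose proof (hom_bound _ _ _ Hx) as Hb.
  apply hom_comp; auto; unfold hmap.
  - destruct (Nat.leb_spec k 0), (Nat.ltb_spec 0 (n-1)); simpl; lia.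
  - destruct (Nat.leb_spec k (n-1)), (Nat.ltb_spec (n-1) (n-1)); simpl; lia.
  - intros a. specialize (Hb a). destruct (Nat.leb_spec k (z a)), (Nat.ltb_spec (z a) (n-1)); simpl; lia.
  - intros a b. pose proof (Hb a). pose proof (Hb b).
    destruct (Nat.leb_spec k (z a)), (Nat.ltb_spec (z a) (n-1)), (Nat.leb_spec k (z b)), (Nat.ltb_spec (z b) (n-1)); simpl; lia.
  - intros a b. pose proof (Hb a). pose proof (Hb b).
    destruct (Nat.leb_spec k (z a)), (Nat.ltb_spec (z a) (n-1)), (Nat.leb_spec k (z b)), (Nat.ltb_spec (z b) (n-1)); simpl; lia.
Qed.

Lemma hmap_F n k t : t < n -> 1 <= k <= n - 2 -> (hmap n k t = n - 1 <-> n - 2 <= t).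
Proof. intros. unfold hmap. destruct (Nat.leb_spec k t), (Nat.ltb_spec t (n-1)); simpl; lia. Qed.
Lemma hmap_top n k : hmap n k (n-1) = n-1.
Proof. unfold hmap. destruct (Nat.leb_spec k (n-1)), (Nat.ltb_spec (n-1) (n-1)); simpl; lia. Qed.
Lemma Tr_F n j t : t < n -> 1 <= j <= n - 1 -> (Tr n j t = n - 1 <-> j <= t).
Proof. intros. unfold Tr. destruct (Nat.leb_spec j t); lia. Qed.
Lemma Mv_F n u t : 4 <= n -> t < n -> 1 <= u <= n - 2 -> (Mv n u t = n - 1 <-> t = n - 1).
Proof. intros. unfold Mv. destruct (Nat.eqb_spec t u); lia. Qed.

Lemma gmap_Gm i t : t <> i -> gmap i t = Some (Gm i t).
Proof. intros. unfold gmap, Gm. destruct (Nat.eqb_spec t i); [lia|]. destruct (Nat.eqb_spec t (i+1)); auto. Qed.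

Lemma gmap_fmap i u v : gmap i u = Some v -> fmap i v = Some u.
Proof.
  unfold gmap, fmap. intros H.
  destruct (Nat.eqb_spec u i); [discriminate|].
  destruct (Nat.eqb_spec u (i+1)); injection H; intros E.
  - rewrite <- E. destruct (Nat.eqb_spec i (i+1)); [lia|]. rewrite Nat.eqb_refl. f_equal; lia.
  - rewrite <- E. destruct (Nat.eqb_spec u (i+1)); [lia|]. destruct (Nat.eqb_spec u i); [lia|]. reflexivity.
Qed.

Lemma sig_F n fs i u v : 4 <= n -> 1 <= i <= n - 3 -> sig_i fs i u = Some v -> (u = n - 1 <-> v = n - 1).
Proof.
  intros Hn Hi. unfold sig_i, gmap, fmap. destruct (fs i).
  - destruct (Nat.eqb_spec u (i+1)); [discriminate|]. destruct (Nat.eqb_spec u i); intro H; injection H; intros E; lia.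
  - destruct (Nat.eqb_spec u i); [discriminate|]. destruct (Nat.eqb_spec u (i+1)); intro H; injection H; intros E; lia.
Qed.
Lemma step_sym n A fs x y : step n A fs x y -> step n A fs y x.
Proof. intros [Hx [Hy [i [Hi H]]]]. split; [|split]; auto. exists i; split; auto; tauto. Qed.

Lemma sim_sym n A fs x y : sim n A fs x y -> sim n A fs y x.
Proof.
  intros H; induction H.
  - apply rt_step, step_sym; auto.
  - apply rt_refl.
  - eapply rt_trans; eauto.
Qed.

Lemma sim_F n A fs x y : 4 <= n -> sim n A fs x y -> forall a, x a = n - 1 <-> y a = n - 1.
Proof.
  intros Hn H; induction H; intros a.
  - destruct H as [_ [_ [i [Hi [H|H]]]]]; specialize (H a).
    + apply (sig_F n fs i); auto.
    + symmetry; apply (sig_F n fs i); auto.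
  - tauto.
  - rewrite IHclos_refl_trans1; auto.
Qed.

Lemma Gm_step n A fs x i : 4 <= n -> is_hom n A x -> 1 <= i <= n - 3 -> ~ (exists a, x a = i) ->
  step n A fs x (fun a => Gm i (x a)).
Proof.
  intros Hn Hx Hi Hno.
  assert (Hne : forall a, x a <> i) by (intros a E; apply Hno; eauto).
  split; [auto|split; [apply Gm_hom; auto|]].
  exists i; split; auto. unfold sig_i; destruct (fs i).
  - right. intros a. apply gmap_fmap. apply gmap_Gm; auto.
  - left. intros a. apply gmap_Gm; auto.
Qed.

Definition imb (A : HSig) (x : A -> nat) (v : nat) : bool :=
  if excluded_middle_informative (exists a, x a = v) then true else false.
Fixpoint msum (f : nat -> nat) (N : nat) := match N with 0 => 0 | S N' => msum f N' + f N' end.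
Definition mu n A x := msum (fun v => if imb A x v then v else 0) n.

Lemma imb_spec A x v : imb A x v = true <-> exists a, x a = v.
Proof. unfold imb. destruct (excluded_middle_informative _); split; intros; auto; try discriminate; tauto. Qed.
Lemma imb_spec' A x v : imb A x v = false <-> ~ exists a, x a = v.
Proof. unfold imb. destruct (excluded_middle_informative _); split; intros; auto; try discriminate; tauto. Qed.

Lemma msum_change f g i N : (forall v, v <> i -> v <> i+1 -> f v = g v) ->
  f i = 0 -> g i = i -> f (i+1) = i+1 -> g (i+1) = 0 ->
  msum f N + (if i <? N then i else 0) = msum g N + (if i+1 <? N then i+1 else 0).
Proof.
  intros Hfg H1 H2 H3 H4. induction N; simpl. reflexivity.
  destruct (Nat.eq_dec N i) as [E|E]; [subst N|destruct (Nat.eq_dec N (i+1)) as [E'|E']; [subst N|]].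
  - rewrite H1, H2. revert IHN.
    destruct (Nat.ltb_spec i i), (Nat.ltb_spec (i+1) i), (Nat.ltb_spec i (S i)), (Nat.ltb_spec (i+1) (S i)); lia.
  - rewrite H3, H4. revert IHN.
    destruct (Nat.ltb_spec i (i+1)), (Nat.ltb_spec (i+1) (i+1)), (Nat.ltb_spec i (S (i+1))), (Nat.ltb_spec (i+1) (S (i+1))); lia.
  - rewrite (Hfg N E E'). revert IHN.
    destruct (Nat.ltb_spec i N), (Nat.ltb_spec (i+1) N), (Nat.ltb_spec i (S N)), (Nat.ltb_spec (i+1) (S N)); lia.
Qed.

Lemma mu_dec n A x i : i + 1 < n -> 1 <= i -> ~ (exists a, x a = i) -> (exists a, x a = i + 1) ->
  mu n A (fun a => Gm i (x a)) + 1 = mu n A x.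
Proof.
  intros Hin Hi Hno Hyes. unfold mu.
  pose proof (msum_change (fun v => if imb A x v then v else 0)
                          (fun v => if imb A (fun a => Gm i (x a)) v then v else 0) i n) as M.
  assert (Ex : forall v, v <> i -> v <> i + 1 -> ((exists a, x a = v) <-> exists a, Gm i (x a) = v)).
  { intros v H1 H2. unfold Gm. split; intros [a Ha]; exists a.
    - destruct (Nat.eqb_spec (x a) (i+1)); lia.
    - destruct (Nat.eqb_spec (x a) (i+1)); lia. }
  assert (Ei : imb A (fun a => Gm i (x a)) i = true).
  { apply imb_spec. destruct Hyes as [a Ha]. exists a. unfold Gm. rewrite Ha, Nat.eqb_refl. auto. }
  assert (Ei1 : imb A (fun a => Gm i (x a)) (i+1) = false).
  { apply imb_spec'. intros [a Ha]. unfold Gm in Ha. destruct (Nat.eqb_spec (x a) (i+1)); lia. }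
  assert (Fi : imb A x i = false) by (apply imb_spec'; auto).
  assert (Fi1 : imb A x (i+1) = true) by (apply imb_spec; auto).
  cbv beta in M. rewrite Ei, Ei1, Fi, Fi1 in M.
  assert (i <? n = true) by (apply Nat.ltb_lt; lia).
  assert (i + 1 <? n = true) by (apply Nat.ltb_lt; lia).
  rewrite H, H0 in M.
  assert (msum (fun v => if imb A x v then v else 0) n + i =
      msum (fun v => if imb A (fun a => Gm i (x a)) v then v else 0) n + (i + 1)).
  { apply M; auto. intros v H1 H2.
    destruct (imb A x v) eqn:E1, (imb A (fun a => Gm i (x a)) v) eqn:E2; auto.
    - apply imb_spec in E1. apply imb_spec' in E2. exfalso; apply E2, Ex; auto.
    - apply imb_spec' in E1. apply imb_spec in E2. exfalso; apply E1, Ex; auto. }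
  lia.
Qed.

Definition compact n A (z : A -> nat) :=
  forall v, 2 <= v <= n - 2 -> (exists a, z a = v) -> exists b, z b = v - 1.

Lemma compact_exists n A fs : 4 <= n -> forall m x, mu n A x = m -> is_hom n A x ->
  exists x', sim n A fs x x' /\ is_hom n A x' /\ compact n A x'.
Proof.
  intros Hn m. induction m as [m IH] using lt_wf_ind. intros x Hm Hx.
  destruct (classic (exists v, 2 <= v <= n - 2 /\ (exists a, x a = v) /\ ~ exists b, x b = v - 1))
    as [[v [Hv [Hy Hno]]]|Hc].
  - set (i := v - 1) in *.
    assert (Hv' : v = i + 1) by lia. rewrite Hv' in Hy.
    destruct (IH (mu n A (fun a => Gm i (x a)))) with (x := fun a => Gm i (x a)) as [x' [H1 [H2 H3]]].
    + rewrite <- Hm. rewrite <- (mu_dec n A x i); auto; lia.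
    + reflexivity.
    + apply Gm_hom; auto; lia.
    + exists x'; split; auto. eapply rt_trans; [apply rt_step, Gm_step|]; eauto; lia.
  - exists x; split; [apply rt_refl|split; auto].
    intros v Hv He. apply NNPP; intro N. apply Hc. eauto.
Qed.

Lemma compact_down n A z : compact n A z -> forall d w u c, w = u + d -> z c = w -> 1 <= u -> w <= n - 2 ->
  exists b, z b = u.
Proof.
  intros Cz d. induction d; intros w u c Hw Hc Hu Hwn.
  - exists c; lia.
  - destruct (Cz w) as [b Hb]; [lia|eauto|].
    apply (IHd (w - 1) u b); lia.
Qed.

Lemma compact_eq n A x y : 4 <= n -> is_hom n A x -> is_hom n A y -> compact n A x -> compact n A y ->
  (forall a, x a = n - 1 <-> y a = n - 1) -> forall a, x a = y a.
Proof.
  intros Hn Hx Hy Cx Cy HF.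
  assert (Hle : forall a b, x a <= x b <-> y a <= y b).
  { intros. rewrite (hom_le _ _ _ _ _ Hx), (hom_le _ _ _ _ _ Hy). apply HF. }
  assert (Hlt : forall a b, x a < x b <-> y a < y b).
  { intros. rewrite !Nat.lt_nge, Hle. tauto. }
  pose proof (hom_bound _ _ _ Hx) as Bx. pose proof (hom_bound _ _ _ Hy) as By.
  assert (Main : forall v a, x a = v -> v < n - 1 -> y a = v).
  { intros v. induction v as [v IH] using lt_wf_ind. intros a Ha Hv.
    destruct v as [|v'].
    - assert (x a <= x (hbot A)) by (rewrite (hom_bot _ _ _ Hx); lia).
      apply Hle in H. rewrite (hom_bot _ _ _ Hy) in H. lia.
    - assert (Hb : exists b, x b = v').
      { destruct v' as [|v''].
        - exists (hbot A). apply (hom_bot _ _ _ Hx).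
        - apply (compact_down n A x Cx 1 (S (S v'')) (S v'') a); lia. }
      destruct Hb as [b Hb].
      assert (Eb : y b = v') by (apply IH with (m := v'); lia).
      assert (y b < y a) by (apply Hlt; lia).
      assert (y a <> n - 1) by (intro E; apply HF in E; lia).
      pose proof (By a).
      destruct (Nat.eq_dec (y a) (S v')) as [|Hne]; auto. exfalso.
      destruct (compact_down n A y Cy (y a - S v') (y a) (S v') a) as [c Hc]; try lia.
      assert (x b < x c) by (apply Hlt; lia).
      assert (x c < x a) by (apply Hlt; lia).
      lia. }
  intros a. destruct (Nat.eq_dec (x a) (n-1)) as [E|E].
  - rewrite E. symmetry. apply HF; auto.
  - symmetry. apply Main; auto. pose proof (Bx a). lia.
Qed.

Lemma sim_of_F n A fs x y : 4 <= n -> is_hom n A x -> is_hom n A y ->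
  (forall a, x a = n - 1 <-> y a = n - 1) -> sim n A fs x y.
Proof.
  intros Hn Hx Hy HF.
  destruct (compact_exists n A fs Hn _ x eq_refl Hx) as [x' [Sx [Hx' Cx]]].
  destruct (compact_exists n A fs Hn _ y eq_refl Hy) as [y' [Sy [Hy' Cy]]].
  assert (E : x' = y').
  { apply functional_extensionality. apply compact_eq with (n := n) (A := A); auto.
    intros a. rewrite <- (sim_F _ _ _ _ _ Hn Sx), <- (sim_F _ _ _ _ _ Hn Sy). auto. }
  subst y'. eapply rt_trans; [exact Sx|]. apply sim_sym; auto.
Qed.
Lemma le_F n A fs k x y : 4 <= n -> le n A fs k x y -> forall a, x a = n - 1 -> y a = n - 1.
Proof.
  intros Hn H; induction H; intros a Ha; auto.
  destruct H as [Hs|[_ [z [_ [Hz1 Hz2]]]]].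
  - apply (sim_F _ _ _ _ _ Hn Hs); auto.
  - apply (sim_F _ _ _ _ _ Hn Hz2). simpl.
    apply (sim_F _ _ _ _ _ Hn Hz1) in Ha. rewrite Ha. apply hmap_top.
Qed.

Lemma nat_min (P : nat -> Prop) : (exists v, P v) -> exists w, P w /\ forall u, P u -> w <= u.
Proof.
  intros [v Hv]. revert Hv. induction v as [v IH] using lt_wf_ind. intros Hv.
  destruct (classic (exists u, u < v /\ P u)) as [[u [Hu Pu]]|N].
  - apply (IH u Hu Pu).
  - exists v; split; auto. intros u Pu. destruct (Nat.lt_ge_cases u v); auto. exfalso; eauto.
Qed.

Lemma chain n A x y : 4 <= n -> is_hom n A x -> is_hom n A y -> (forall a, x a = n - 1 -> y a = n - 1) ->
  exists j, 1 <= j <= n - 1 /\ forall a, y a = n - 1 <-> j <= x a.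
Proof.
  intros Hn Hx Hy Hinc.
  destruct (nat_min (fun v => exists a, y a = n - 1 /\ x a = v)) as [w [[b0 [Hb1 Hb2]] Hmin]].
  { exists (x (htop A)), (htop A). split; auto. apply (hom_top _ _ _ Hy). }
  pose proof (hom_bound _ _ _ Hx) as Bx. pose proof (hom_bound _ _ _ Hy) as By.
  exists w. split; [split|].
  - destruct (Nat.eq_dec w 0) as [E|E]; [|lia]. exfalso.
    assert (x b0 <= x (hbot A)) by (rewrite (hom_bot _ _ _ Hx); lia).
    apply (hom_le _ _ _ _ _ Hx), Hinc, (hom_le _ _ _ _ _ Hy) in H.
    rewrite (hom_bot _ _ _ Hy) in H. lia.
  - specialize (Bx b0). lia.
  - intros a. split; intros H.
    + apply Hmin. eauto.
    + assert (x b0 <= x a) by lia.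
      apply (hom_le _ _ _ _ _ Hx), Hinc, (hom_le _ _ _ _ _ Hy) in H0.
      specialize (By a). lia.
Qed.

Lemma le_trunc n A fs k x : 4 <= n -> 1 <= k <= n - 2 -> is_hom n A x ->
  forall d j, j + d = n - 1 -> 1 <= j -> le n A fs k x (fun a => Tr n j (x a)).
Proof.
  intros Hn Hk Hx. pose proof (hom_bound _ _ _ Hx) as Bx.
  induction d; intros j Hj Hj1.
  - apply rt_step. left. apply sim_of_F; auto. apply Tr_hom; auto; lia.
    intros a. rewrite Tr_F; auto; [|lia]. specialize (Bx a). lia.
  - specialize (IHd (j + 1) ltac:(lia) ltac:(lia)).
    set (w := fun a => Tr n (j+1) (x a)) in *.
    assert (Hw : is_hom n A w) by (apply Tr_hom; auto; lia).
    assert (Ht : is_hom n A (fun a => Tr n j (x a))) by (apply Tr_hom; auto; lia).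
    eapply rt_trans; [exact IHd|]. apply rt_step.
    destruct (classic (exists a, x a = j)) as [Hyes|Hno].
    + set (z := fun a => Mv n j (w a)).
      assert (Him : forall a, w a <= j \/ w a = n - 1).
      { intros a; unfold w, Tr. destruct (Nat.leb_spec (j+1) (x a)); lia. }
      assert (Hz : is_hom n A z) by (apply Mv_hom; auto; lia).
      assert (Hh : is_hom n A (fun a => hmap n k (z a))) by (apply hmap_hom; auto).
      assert (S2 : sim n A fs (fun a => hmap n k (z a)) (fun a => Tr n j (x a))).
      { apply sim_of_F; auto. intros a.
        pose proof (hom_bound _ _ _ Hz a). pose proof (Bx a).
        rewrite hmap_F, Tr_F; auto; try lia. unfold z, Mv, w, Tr.
        destruct (Nat.leb_spec (j+1) (x a)); [destruct (Nat.eqb_spec (n-1) j)|destruct (Nat.eqb_spec (x a) j)]; lia. }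
      destruct (classic (sim n A fs w (fun a => Tr n j (x a)))) as [S|NS]; [left; auto|right].
      split; auto. exists z. split; auto. split; auto.
      apply sim_of_F; auto. intros a. pose proof (hom_bound _ _ _ Hw a). apply Mv_F; auto; lia.
    + left. apply sim_of_F; auto. intros a. pose proof (Bx a). unfold w.
      rewrite !Tr_F; auto; try lia. split; intros; try lia.
      destruct (Nat.eq_dec (x a) j); [exfalso; eauto|lia].
Qed.

Lemma le_of_F n A fs k x y : 4 <= n -> 1 <= k <= n - 2 -> is_hom n A x -> is_hom n A y ->
  (forall a, x a = n - 1 -> y a = n - 1) -> le n A fs k x y.
Proof.
  intros Hn Hk Hx Hy Hinc.
  destruct (chain n A x y Hn Hx Hy Hinc) as [j [Hj HF]].
  eapply rt_trans; [apply (le_trunc n A fs k x Hn Hk Hx (n - 1 - j) j); lia|].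
  apply rt_step; left. apply sim_of_F; auto. apply Tr_hom; auto.
  intros a. rewrite Tr_F; [|apply (hom_bound _ _ _ Hx)|auto]. rewrite HF. tauto.
Qed.

Lemma pigeon : forall m N (f : nat -> nat), (forall i, i < m -> f i < N) ->
  (forall i j, i < m -> j < m -> f i = f j -> i = j) -> m <= N.
Proof.
  induction m; intros N f Hb Hi. lia.
  set (t := f m).
  assert (HN: t < N) by (apply Hb; lia).
  assert (Hne : forall i, i < m -> f i <> t).
  { intros i Hi' E. assert (i = m) by (apply Hi; lia). lia. }
  assert (m <= N - 1).
  { apply (IHm (N-1) (fun i => if f i <? t then f i else f i - 1)).
    - intros i Hi'. pose proof (Hne i Hi'). assert (f i < N) by (apply Hb; lia).
      destruct (Nat.ltb_spec (f i) t); lia.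
    - intros i j Hi' Hj' E. apply Hi; try lia.
      pose proof (Hne i Hi'). pose proof (Hne j Hj').
      destruct (Nat.ltb_spec (f i) t), (Nat.ltb_spec (f j) t); lia. }
  lia.
Qed.
Theorem lemma4p2 (n : nat) (Hn : 4 <= n) (A : HSig) (HA : in_Gn n A) :
  (forall (fs : nat -> bool) (k : nat) (fs' : nat -> bool) (k' : nat),
     1 <= k <= n - 2 -> 1 <= k' <= n - 2 ->
     (forall x y, is_hom n A x -> is_hom n A y ->
        (sim n A fs x y <-> sim n A fs' x y)) /\
     (forall x y, is_hom n A x -> is_hom n A y ->
        (le n A fs k x y <-> le n A fs' k' x y))) /\
  (forall (fs : nat -> bool) (k : nat), 1 <= k <= n - 2 ->
     (forall x, is_hom n A x -> le n A fs k x x) /\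
     (forall x y z, is_hom n A x -> is_hom n A y -> is_hom n A z ->
        le n A fs k x y -> le n A fs k y z -> le n A fs k x z) /\
     (forall x y, is_hom n A x -> is_hom n A y ->
        le n A fs k x y -> le n A fs k y x -> sim n A fs x y) /\
     (forall (p : A -> nat) (m : nat) (c : nat -> A -> nat),
        is_hom n A p ->
        (forall i, i < m -> is_hom n A (c i) /\ le n A fs k p (c i)) ->
        (forall i j, i < m -> j < m -> i <> j -> ~ sim n A fs (c i) (c j)) ->
        (forall i j, i < m -> j < m ->
           le n A fs k (c i) (c j) \/ le n A fs k (c j) (c i)) ->
        m - 1 <= n - 2) /\
     (forall x y, is_hom n A x -> is_hom n A y ->
        (prec n A fs k x y <->
          (le n A fs k x y /\ ~ sim n A fs x y /\
           forall z, is_hom n A z -> le n A fs k x z -> le n A fs k z y ->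
             sim n A fs z x \/ sim n A fs z y)))).
Proof.
  split.
  { intros fs k fs' k' Hk Hk'. split.
    - intros x y Hx Hy; split; intros H; apply sim_of_F; auto; apply (sim_F _ _ _ _ _ Hn H).
    - intros x y Hx Hy; split; intros H; apply le_of_F; auto; apply (le_F _ _ _ _ _ _ Hn H). }
  intros fs k Hk.
  split; [intros; apply rt_refl|].
  split; [intros; eapply rt_trans; eauto|].
  split.
  { intros x y Hx Hy H1 H2. apply sim_of_F; auto. intros a; split.
    - apply (le_F _ _ _ _ _ _ Hn H1). - apply (le_F _ _ _ _ _ _ Hn H2). }
  split.
  { intros p m c Hp Hc Hns _.
    assert (Ex : forall i, exists j, i < m -> 1 <= j <= n - 1 /\ forall a, c i a = n - 1 <-> j <= p a).
    { intros i. destruct (lt_dec i m) as [Hi|Hi].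
      - destruct (Hc i Hi) as [Hci Hle].
        destruct (chain n A p (c i) Hn Hp Hci (le_F _ _ _ _ _ _ Hn Hle)) as [j Hj].
        exists j; auto.
      - exists 0; intros; lia. }
    set (f := fun i => proj1_sig (constructive_indefinite_description _ (Ex i))).
    assert (Hf : forall i, i < m -> 1 <= f i <= n - 1 /\ forall a, c i a = n - 1 <-> f i <= p a).
    { intros i Hi. unfold f. destruct (constructive_indefinite_description _ (Ex i)); simpl; auto. }
    assert (m <= n - 1).
    { apply (pigeon m (n - 1) (fun i => f i - 1)).
      - intros i Hi. destruct (Hf i Hi). lia.
      - intros i j Hi Hj E. destruct (Nat.eq_dec i j) as [|Hne]; auto. exfalso.
        apply (Hns i j Hi Hj Hne). destruct (Hf i Hi) as [Hi1 Hi2]. destruct (Hf j Hj) as [Hj1 Hj2].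
        apply sim_of_F; auto; try apply Hc; auto. intros a. rewrite Hi2, Hj2.
        assert (f i = f j) by lia. rewrite H. tauto. }
    lia. }
  intros x y Hx Hy. pose proof (hom_bound _ _ _ Hx) as Bx. split.
  - intros Hp. split; [apply rt_step; right; auto|]. split; [apply Hp|].
    intros z Hz H1 H2. destruct Hp as [_ [z0 [Hz0 [S1 S2]]]].
    pose proof (hom_bound _ _ _ Hz0) as Bz0.
    assert (Hinc : forall a, z0 a = n - 1 -> z a = n - 1).
    { intros a Ha. apply (le_F _ _ _ _ _ _ Hn H1). apply (sim_F _ _ _ _ _ Hn S1). auto. }
    destruct (chain n A z0 z Hn Hz0 Hz Hinc) as [j [Hj HF]].
    destruct (Nat.eq_dec j (n - 1)) as [E|E].
    + left. apply sim_of_F; auto. intros a. rewrite HF, <- (sim_F _ _ _ _ _ Hn S1).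
      pose proof (Bz0 a). lia.
    + right. apply sim_of_F; auto. intros a. split.
      * apply (le_F _ _ _ _ _ _ Hn H2).
      * intros Ha. apply HF. apply (sim_F _ _ _ _ _ Hn S2) in Ha.
        rewrite hmap_F in Ha; auto. lia.
  - intros [Hle [Hns Hmax]].
    pose proof (le_F _ _ _ _ _ _ Hn Hle) as Hinc.
    destruct (chain n A x y Hn Hx Hy Hinc) as [j [Hj HF]].
    assert (Hj2 : j <= n - 2).
    { destruct (Nat.eq_dec j (n-1)); [|lia]. exfalso. apply Hns. apply sim_of_F; auto.
      intros a. rewrite HF. pose proof (Bx a). lia. }
    assert (Hu : exists u, j <= u <= n - 2 /\ exists a, x a = u).
    { apply NNPP; intro N. apply Hns. apply sim_of_F; auto. intros a. rewrite HF.
      pose proof (Bx a). split; intros; [lia|].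
      destruct (Nat.eq_dec (x a) (n-1)); auto. exfalso. apply N. exists (x a). split; eauto; lia. }
    destruct Hu as [u [Hu [au Hau]]].
    assert (Two : forall lo hi, j <= lo < hi -> hi <= n - 2 -> (exists a, x a = lo) -> (exists a, x a = hi) -> False).
    { intros lo hi H1 H2 [alo Hlo] [ahi Hhi].
      assert (Ht : is_hom n A (fun a => Tr n hi (x a))) by (apply Tr_hom; auto; lia).
      assert (L1 : le n A fs k x (fun a => Tr n hi (x a))).
      { apply le_of_F; auto. intros a Ha. rewrite Tr_F; auto; lia. }
      assert (L2 : le n A fs k (fun a => Tr n hi (x a)) y).
      { apply le_of_F; auto. intros a Ha. rewrite Tr_F in Ha; auto; try lia. apply HF. lia. }
      destruct (Hmax _ Ht L1 L2) as [S|S]; pose proof (sim_F _ _ _ _ _ Hn S) as SF.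
      - specialize (SF ahi). rewrite Tr_F in SF; auto; lia.
      - specialize (SF alo). rewrite Tr_F, HF in SF; auto; lia. }
    assert (Him : forall a, x a <= u \/ x a = n - 1).
    { intros a. pose proof (Bx a).
      destruct (Nat.lt_total (x a) u) as [|[|]]; try lia.
      destruct (Nat.eq_dec (x a) (n-1)); auto. exfalso.
      apply (Two u (x a)); eauto; lia. }
    split; auto.
    set (z := fun a => Mv n u (x a)).
    assert (Hz : is_hom n A z) by (apply Mv_hom; auto; lia).
    exists z. split; auto. split.
    + apply sim_of_F; auto. intros a. apply Mv_F; auto; lia.
    + apply sim_of_F; auto. apply hmap_hom; auto.
      intros a. rewrite hmap_F; auto; [|apply (hom_bound _ _ _ Hz)]. rewrite HF.
      pose proof (Bx a). pose proof (Him a). unfold z, Mv.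
      destruct (Nat.eqb_spec (x a) u); [lia|].
      split; intros; [lia|].
      destruct (Nat.eq_dec (x a) (n-1)); [lia|exfalso].
      apply (Two (x a) u); eauto; lia.
Qed.
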